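(* For all integers $m\ge 0$ and $n\ge 1$, $$\int_0^{\pi/2}x^{2m}\cos^{2n-1}(x)\,dx=\frac{(2m)!}{2}\,\frac{4^n}{n\binom{2n}{n}}\sum_{j=0}^m\frac{(-1)^j\,t_n^{\star}(\{2\}_j)}{(2m-2j)!}\left(\frac{\pi}{2}\right)^{2m-2j}.$$
   Context: For integers $n\ge 1$ and $j\ge 0$, the multiple $t$-harmonic star sum is $$t_n^{\star}(\{2\}_j)=\sum_{n\ge k_1\ge\dots\ge k_j\ge 1}\prod_{i=1}^j\frac{1}{(2k_i-1)^2},$$ with $t_n^{\star}(\{2\}_0)=1$; equivalently $t_n^{\star}(\{2\}_j)=\sum_{k=1}^n \frac{t_k^{\star}(\{2\}_{j-1})}{(2k-1)^2}$ for $j\ge1$. *)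

(* Defs.v *)
From Stdlib Require Import Reals Factorial.
From Coquelicot Require Import Coquelicot.
Open Scope R_scope.

Fixpoint sum_1_to (f : nat -> R) (n : nat) : R :=
  match n with
  | O => 0
  | S p => sum_1_to f p + f (S p)
  end.

(* tstar n j = t_n^*({2}_j) = sum_{n >= k_1 >= ... >= k_j >= 1} prod 1/(2k_i-1)^2,
   via the recursion t_n^*({2}_j) = sum_{k=1}^n t_k^*({2}_{j-1}) / (2k-1)^2. *)
Fixpoint tstar (n j : nat) {struct j} : R :=
  match j with
  | O => 1
  | S j' => sum_1_to (fun k => tstar k j' / (2 * INR k - 1) ^ 2) n
  end.

(* Main.v *)
Require Import Defs.
From Stdlib Require Import Reals Lra Lia Factorial.
From Coquelicot Require Import Coquelicot.
Open Scope R_scope.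
Lemma lin3 (f1 f2 f3 G : R -> R) (a b c u v : R) :
  (forall x, ex_derive f1 x) -> (forall x, ex_derive f2 x) -> (forall x, ex_derive f3 x) ->
  (forall x, is_derive G x (a * f1 x - b * f2 x - c * f3 x)) ->
  a * RInt f1 u v - b * RInt f2 u v - c * RInt f3 u v = G v - G u.
Proof.
intros d1 d2 d3 dG.
assert (cont : forall f : R -> R, (forall x, ex_derive f x) -> ex_RInt f u v).
{ intros f df. apply (ex_RInt_continuous (V:=R_CompleteNormedModule)). intros z _. apply (ex_derive_continuous (K:=R_AbsRing) (V:=R_NormedModule)). apply df. }
assert (H1 := RInt_correct _ _ _ (cont _ d1)).
assert (H2 := RInt_correct _ _ _ (cont _ d2)).
assert (H3 := RInt_correct _ _ _ (cont _ d3)).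
assert (HA := is_RInt_minus _ _ _ _ _ _ (is_RInt_minus _ _ _ _ _ _ (is_RInt_scal _ _ _ a _ H1) (is_RInt_scal _ _ _ b _ H2)) (is_RInt_scal _ _ _ c _ H3)).
assert (HB : is_RInt (fun x => a * f1 x - b * f2 x - c * f3 x) u v (minus (G v) (G u))).
{ apply (is_RInt_derive (V:=R_CompleteNormedModule)). intros x _. apply dG.
  intros x _. apply (ex_derive_continuous (K:=R_AbsRing) (V:=R_NormedModule)).
  auto_derive; repeat split; auto. }
apply (is_RInt_unique (V:=R_CompleteNormedModule)) in HA.
apply (is_RInt_unique (V:=R_CompleteNormedModule)) in HB.
transitivity (RInt (fun x => a * f1 x - b * f2 x - c * f3 x) u v).
- exact (eq_sym HA).
- exact HB.
Qed.
Lemma derG k N' x : is_derive (fun x => x^(S (S k)) * (- INR (S (S N')) * cos x ^ (S N') * sin x) - INR(S (S k)) * x^(S k) * cos x ^ (S (S N'))) x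
  (INR (S (S N')) * INR (S N') * (x^(S (S k)) * cos x ^ N') - INR (S (S N'))^2 * (x^(S (S k)) * cos x ^ (S (S N'))) - INR (S (S k)) * INR (S k) * (x^k * cos x ^ (S (S N')))).
Proof.
rewrite !S_INR.
auto_derive; auto.
change (match k with 0%nat => 1 | S _ => INR k + 1 end) with (INR (S k)).
change (match N' with 0%nat => 1 | S _ => INR N' + 1 end) with (INR (S N')).
rewrite ?S_INR. cbn [pow pred]. 
transitivity ((INR N' +1+1) * (INR N'+1) * (x*(x*x^k)) * cos x ^ N' * sin x ^2 - (INR N'+1+1) * (x*(x*x^k))*(cos x * (cos x * cos x ^ N')) - (INR k+1+1) * (INR k+1) * (x^k * (cos x * (cos x * cos x ^ N')))).
- ring.
- rewrite <- Rsqr_pow2, sin2. unfold Rsqr. ring.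
Qed.
Lemma derG0 N' x : is_derive (fun x => - INR (S (S N')) * cos x ^ (S N') * sin x) x
  (INR (S (S N')) * INR (S N') * (x^0 * cos x ^ N') - INR (S (S N'))^2 * (x^0 * cos x ^ (S (S N'))) - 0 * (x^0 * cos x ^ (S (S N')))).
Proof.
rewrite !S_INR.
auto_derive; auto.
change (match N' with 0%nat => 1 | S _ => INR N' + 1 end) with (INR (S N')).
rewrite ?S_INR. cbn [pow pred].
transitivity ((INR N' +1+1) * (INR N'+1) * cos x ^ N' * sin x ^2 - (INR N'+1+1) * (cos x * (cos x * cos x ^ N'))).
- ring.
- rewrite <- Rsqr_pow2, sin2. unfold Rsqr. ring.
Qed.

Lemma derGA k x : is_derive (fun x => x^(S (S k)) * (- sin x) - INR(S (S k)) * x^(S k) * cos x) x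
  ((-1) * (x^(S (S k)) * cos x ^ 1) - INR (S (S k)) * INR (S k) * (x^k * cos x ^ 1) - 0 * (x^k * cos x ^ 1)).
Proof.
rewrite !S_INR.
auto_derive; auto.
change (match k with 0%nat => 1 | S _ => INR k + 1 end) with (INR (S k)).
rewrite ?S_INR. cbn [pow pred]. ring.
Qed.

Lemma derGB x : is_derive sin x (1 * (x^0 * cos x ^ 1) - 0 * (x^0 * cos x ^ 1) - 0 * (x^0 * cos x ^ 1)).
Proof. auto_derive; auto. ring. Qed.

Definition Ik k N : R := RInt (fun x => x^k * cos x ^ N) 0 (PI/2).

Lemma exd k N x : ex_derive (fun x => x^k * cos x ^ N) x.
Proof. auto_derive; auto. Qed.

Lemma rec1 k N' : INR(S(S N'))*INR(S N') * Ik (S(S k)) N' - INR(S(S N'))^2 * Ik (S(S k)) (S(S N')) - INR(S(S k))*INR(S k) * Ik k (S(S N')) = 0.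
Proof.
unfold Ik. refine (eq_trans (lin3 _ _ _ _ _ _ _ 0 (PI/2) (exd _ _) (exd _ _) (exd _ _) (derG k N')) _).
rewrite cos_PI2. simpl. ring.
Qed.

Lemma rec0 N' : INR(S(S N'))*INR(S N') * Ik 0 N' - INR(S(S N'))^2 * Ik 0 (S(S N')) = 0.
Proof.
unfold Ik.
match goal with |- ?a - ?b = 0 => replace (a - b) with (a - b - 0 * RInt (fun x => x ^ 0 * cos x ^ (S (S N'))) 0 (PI/2)) by ring end.
refine (eq_trans (lin3 _ _ _ _ _ _ _ 0 (PI/2) (exd _ _) (exd _ _) (exd _ _) (derG0 N')) _).
rewrite cos_PI2, sin_0. simpl. ring.
Qed.

Lemma recA k : Ik (S(S k)) 1 = (PI/2)^(S(S k)) - INR(S(S k))*INR(S k) * Ik k 1.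
Proof.
unfold Ik.
assert (H := lin3 _ _ _ _ _ _ _ 0 (PI/2) (exd _ _) (exd _ _) (exd _ _) (derGA k)).
assert (E : forall a b c : R, -1 * a - b - c = - (PI/2)^(S(S k)) -> c = 0 * RInt (fun x => x ^ k * cos x ^ 1) 0 (PI/2) -> a = (PI/2)^(S(S k)) - b).
{ intros a b c H1 H2. rewrite H2 in H1. lra. }
refine (E _ _ _ (eq_trans H _) eq_refl).
rewrite cos_PI2, sin_PI2, sin_0, cos_0. simpl. ring.
Qed.

Lemma recB : Ik 0 1 = 1.
Proof.
unfold Ik.
assert (H := lin3 _ _ _ _ _ _ _ 0 (PI/2) (exd 0 1) (exd 0 1) (exd 0 1) derGB).
assert (E : forall a b c : R, 1 * a - b - c = 1 -> b = 0 * RInt (fun x => x ^ 0 * cos x ^ 1) 0 (PI/2) -> c = b -> a = 1).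
{ intros a b c H1 H2 H3. subst. lra. }
refine (E _ _ _ (eq_trans H _) eq_refl eq_refl).
rewrite sin_PI2, sin_0. ring.
Qed.
Definition Sm m n := sum_f_R0 (fun j => (-1)^j * tstar n j / INR (fact (2*m - 2*j)) * (PI/2)^(2*m-2*j)) m.
Definition Af n := 4^n * INR(fact n)^2 / (INR n * INR(fact(2*n))).
Definition F m n := INR(fact(2*m))/2 * Af n * Sm m n.

Lemma factSS k : INR (fact (S (S k))) = INR (S (S k)) * INR (S k) * INR (fact k).
Proof. rewrite !fact_simpl, !mult_INR. ring. Qed.

Lemma dnz n : 2 * INR (S n) - 1 <> 0.
Proof. rewrite S_INR. pose proof (pos_INR n). lra. Qed.

Lemma Srec m n : Sm (S m) (S n) = Sm (S m) n - Sm m (S n) / (2*INR(S n)-1)^2.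
Proof.
unfold Sm. rewrite !(decomp_sum _ (S m)) by lia. simpl pred.
rewrite Nat.sub_0_r. simpl tstar at 1 3.
assert (E : forall i, (i <= m)%nat ->
  (-1)^(S i) * tstar (S n) (S i) / INR (fact (2*S m - 2*S i)) * (PI/2)^(2*S m - 2*S i)
  = (-1)^(S i) * tstar n (S i) / INR (fact (2*S m - 2*S i)) * (PI/2)^(2*S m - 2*S i)
    - ((-1)^i * tstar (S n) i / INR (fact (2*m - 2*i)) * (PI/2)^(2*m-2*i)) * / (2*INR(S n)-1)^2).
{ intros i Hi. replace (2*S m - 2*S i)%nat with (2*m - 2*i)%nat by lia.
  change (tstar (S n) (S i)) with (sum_1_to (fun k => tstar k i / (2 * INR k - 1) ^ 2) (S n)).
  change (tstar n (S i)) with (sum_1_to (fun k => tstar k i / (2 * INR k - 1) ^ 2) n).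
  cbn [sum_1_to pow]. field. split. apply dnz. apply INR_fact_neq_0. }
rewrite (sum_eq _ _ _ E). rewrite minus_sum, <- scal_sum. unfold Rdiv; ring.
Qed.

Lemma S0 m : Sm m 0 = (PI/2)^(2*m) / INR (fact (2*m)).
Proof.
unfold Sm. destruct m.
- simpl. field.
- rewrite decomp_sum by lia. simpl pred. rewrite sum_eq_R0.
  + rewrite Nat.sub_0_r. simpl tstar. field. apply INR_fact_neq_0.
  + intros i _. simpl tstar. unfold Rdiv. ring.
Qed.

Lemma S00 n : Sm 0 n = 1.
Proof. unfold Sm. simpl. field. Qed.

Lemma Af1 : Af 1 = 2.
Proof. unfold Af. simpl. field. Qed.

Lemma Afrat n : Af (S (S n)) = (2*INR n + 2)/(2*INR n+3) * Af (S n).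
Proof.
unfold Af. replace (2 * S (S n))%nat with (S (S (2 * S n))) by lia.
rewrite (factSS (2 * S n)). rewrite (fact_simpl (S n)), !mult_INR.
pose proof (INR_fact_neq_0 (S n)). pose proof (INR_fact_neq_0 (2 * S n)).
pose proof (pos_INR n).
set (a := INR (fact (S n))) in *. set (b := INR (fact (2 * S n))) in *.
rewrite !S_INR, !mult_INR, !S_INR. replace (INR 2) with 2 by (simpl; ring).
rewrite INR_0. cbn [pow]. field. repeat split; lra.
Qed.

Lemma main n0 m : Ik (2*m) (2*n0+1) = F m (S n0).
Proof.
induction n0 as [|n0 IHn] in m |- *.
- induction m as [|m IHm].
  + simpl. rewrite recB. unfold F. rewrite Af1, S00. simpl. field.
  + replace (2 * S m)%nat with (S (S (2*m))) by lia. simpl (2*0+1)%nat.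
    rewrite recA. simpl (2*0+1)%nat in IHm. rewrite IHm.
    unfold F. rewrite Af1.
    change (Sm (S m) 1) with (Sm (S m) (S 0)). rewrite Srec, S0.
    replace (2 * S m)%nat with (S (S (2*m))) by lia.
    rewrite factSS. pose proof (INR_fact_neq_0 (2*m)).
    set (f := INR (fact (2*m))) in *. set (q := Sm m 1).
    rewrite !S_INR, INR_0. field. pose proof (pos_INR (2*m)). repeat split; lra.
- induction m as [|m IHm2].
  + simpl (2*0)%nat. pose proof (rec0 (2*n0+1)) as R0.
    replace (2 * S n0 + 1)%nat with (S (S (2*n0+1))) by lia.
    pose proof (IHn 0%nat) as H0. simpl (2*0)%nat in H0. rewrite H0 in R0. unfold F in *. rewrite Afrat, !S00 in *.
    simpl fact in *. pose proof (pos_INR n0).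
    rewrite !S_INR, plus_INR, mult_INR in R0. replace (INR 2) with 2 in R0 by (simpl; ring).
    rewrite INR_0, INR_1 in *.
    set (X := Ik 0 (S (S (2 * n0 + 1)))) in *. set (A := Af (S n0)) in *. set (r := INR n0) in *.
    match type of R0 with ?L = 0 => assert (HX : (2*r+1+1+1)^2 * X = (2*r+1+1+1)*(2*r+1+1)*(A/2)) by
      (apply Rminus_diag_uniq; replace ((2*r+1+1+1)^2 * X - (2*r+1+1+1)*(2*r+1+1)*(A/2)) with (-L) by field; rewrite R0; ring) end.
    apply (Rmult_eq_reg_l ((2*r+1+1+1)^2)); [|apply pow_nonzero; lra].
    rewrite HX. field. lra.
  + pose proof (rec1 (2*m) (2*n0+1)) as R1.
    pose proof (IHn (S m)) as H1.
    replace (2 * S m)%nat with (S (S (2*m))) in * by lia.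
    replace (2 * S n0 + 1)%nat with (S (S (2*n0+1))) in * by lia.
    rewrite H1, IHm2 in R1.
    set (X := Ik (S (S (2 * m))) (S (S (2 * n0 + 1)))) in *.
    set (Y1 := F (S m) (S n0)) in *. set (Y2 := F m (S (S n0))) in *.
    set (a := INR (S (S (2 * n0 + 1))) * INR (S (2 * n0 + 1))) in *.
    set (b := INR (S (S (2 * n0 + 1))) ^ 2) in *.
    set (c := INR (S (S (2 * m))) * INR (S (2 * m))) in *.
    assert (Hb : b <> 0).
    { unfold b. apply pow_nonzero. apply not_0_INR. lia. }
    assert (HX : X = (a*Y1 - c*Y2)/b).
    { apply Rminus_diag_uniq. replace (X - (a*Y1 - c*Y2)/b) with (-(a * Y1 - b * X - c * Y2)/b) by (field; exact Hb).
      rewrite R1. field. exact Hb. }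
    rewrite HX. unfold Y1, Y2, F, a, b, c. clear HX R1 H1 IHm2 X Y1 Y2 a b c Hb.
    rewrite Afrat, (Srec m (S n0)).
    replace (2 * S m)%nat with (S (S (2*m))) by lia.
    rewrite factSS.
    pose proof (INR_fact_neq_0 (2*m)). pose proof (pos_INR n0). pose proof (pos_INR (2*m)).
    set (f := INR (fact (2*m))) in *. set (A := Af (S n0)). set (s1 := Sm (S m) (S n0)).
    set (s2 := Sm m (S (S n0))). set (r := INR n0) in *. pose proof (pos_INR m).
    rewrite !S_INR. rewrite !plus_INR, !mult_INR, !S_INR. rewrite ?INR_1, ?INR_0. fold r.
    replace (INR 2) with 2 by (simpl; ring). fold r.
    field. repeat split; lra.
Qed.

Lemma AfC n : (1 <= n)%nat -> 4^n / (INR n * Binomial.C (2*n) n) = Af n.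
Proof.
intros Hn. unfold Binomial.C, Af. replace (2*n - n)%nat with n by lia.
pose proof (INR_fact_neq_0 n). pose proof (INR_fact_neq_0 (2*n)).
assert (INR n <> 0) by (apply not_0_INR; lia).
field. repeat split; auto.
Qed.

Theorem lemma3 (m n : nat) (hn : (1 <= n)%nat) :
  RInt (fun x => x ^ (2 * m) * cos x ^ (2 * n - 1)) 0 (PI / 2) =
  INR (fact (2 * m)) / 2 * (4 ^ n / (INR n * Binomial.C (2 * n) n)) *
  sum_f_R0 (fun j => (-1) ^ j * tstar n j / INR (fact (2 * m - 2 * j))
                       * (PI / 2) ^ (2 * m - 2 * j)) m.
Proof.
rewrite (AfC n hn).
destruct n as [|n0]; [lia|].
replace (2 * S n0 - 1)%nat with (2*n0+1)%nat by lia.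
change (Ik (2*m) (2*n0+1) = F m (S n0)).
apply main.
Qed.
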